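(* Let $\mathcal{F}_2(\rho,\sigma)=\operatorname{tr}(\rho\sigma)/\max[\operatorname{tr}(\rho^2),\operatorname{tr}(\sigma^2)]$ for density matrices $\rho,\sigma$ on the same finite-dimensional Hilbert space. Then: (i) for all density matrices $\rho_1,\sigma_1$ on $\mathcal{H}_1$ and $\rho_2,\sigma_2$ on $\mathcal{H}_2$, $\mathcal{F}_2(\rho_1\otimes\rho_2,\sigma_1\otimes\sigma_2)\ge\mathcal{F}_2(\rho_1,\sigma_1)\,\mathcal{F}_2(\rho_2,\sigma_2)$; (ii) for all density matrices $\rho,\sigma$ on $\mathcal{H}_1$ and $\tau$ on $\mathcal{H}_2$, $\mathcal{F}_2(\rho\otimes\tau,\sigma\otimes\tau)=\mathcal{F}_2(\rho,\sigma)$; (iii) for all density matrices $\rho,\sigma$ and all integers $n\ge 1$, $\mathcal{F}_2(\rho^{\otimes n},\sigma^{\otimes n})=[\mathcal{F}_2(\rho,\sigma)]^n$.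
   Context: A density matrix is a positive semidefinite operator of unit trace on a finite-dimensional complex Hilbert space. *)

(* Defs.v *)
From HB Require Import structures.
From mathcomp Require Import all_boot all_order all_algebra.
From mathcomp Require Export mxtens.
Set Implicit Arguments. Unset Strict Implicit. Unset Printing Implicit Defensive.
Import Order.TTheory GRing.Theory Num.Theory.
Local Open Scope ring_scope.

(* Complex scalars: an arbitrary numeric algebraically closed field C
   (e.g. the complex numbers); operators on an n-dimensional Hilbert
   space are n x n matrices 'M[C]_n. *)

Definition adjmx (C : numClosedFieldType) m n (A : 'M[C]_(m, n)) : 'M[C]_(n, m) :=
  map_mx Num.conj (A^T).

Definition psd (C : numClosedFieldType) n (A : 'M[C]_n) : Prop :=
  adjmx A = A /\ forall v : 'cV[C]_n, 0 <= (adjmx v *m A *m v) 0 0.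

Definition density (C : numClosedFieldType) n (A : 'M[C]_n) : Prop :=
  psd A /\ \tr A = 1.

Definition F2 (C : numClosedFieldType) n (rho sigma : 'M[C]_n) : C :=
  \tr (rho *m sigma) / Num.max (\tr (rho *m rho)) (\tr (sigma *m sigma)).

Fixpoint tdim (n k : nat) : nat :=
  match k with 0 => 1%N | k'.+1 => (n * tdim n k')%N end.

Fixpoint tenspow (C : numClosedFieldType) n (A : 'M[C]_n) (k : nat)
  : 'M[C]_(tdim n k) :=
  match k return 'M[C]_(tdim n k) with
  | 0 => 1%:M
  | k'.+1 => A *t tenspow A k'
  end.

(* Main.v *)
Require Import Defs.
From HB Require Import structures.
From mathcomp Require Import all_boot all_order all_algebra.
From mathcomp Require Import mxtens ring.
Import Order.TTheory GRing.Theory Num.Theory.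
Local Open Scope ring_scope.
Set Implicit Arguments.

Section Form.
Variable C : numClosedFieldType.
Variable n : nat.
Implicit Types (A B : 'M[C]_n) (x y z : 'cV[C]_n).

Definition fm A x y := \sum_(k < n) \sum_(l < n) (x k 0)^* * A k l * y l 0.
Definition herm A := forall i j, (A i j)^* = A j i.
Definition pos A := forall v, 0 <= fm A v v.
Definition ev (i : 'I_n) : 'cV[C]_n := delta_mx i 0.

Lemma fmE A x y : (adjmx x *m A *m y) 0 0 = fm A x y.
Proof.
rewrite /fm mxE.
under eq_bigr do rewrite mxE big_distrl.
rewrite exchange_big; apply: eq_bigr => k _; apply: eq_bigr => l _.
by rewrite !mxE.
Qed.

Lemma psd_herm A : psd A -> herm A.
Proof. by case=> h _ i j; rewrite -{2}h !mxE. Qed.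

Lemma psd_pos A : psd A -> pos A.
Proof. by case=> _ h v; rewrite -fmE. Qed.

Lemma fmDl A x y z : fm A (x + y) z = fm A x z + fm A y z.
Proof.
rewrite /fm -big_split; apply: eq_bigr => k _; rewrite -big_split.
by apply: eq_bigr => l _; rewrite !mxE rmorphD /=; ring.
Qed.

Lemma fmDr A x y z : fm A x (y + z) = fm A x y + fm A x z.
Proof.
rewrite /fm -big_split; apply: eq_bigr => k _; rewrite -big_split.
by apply: eq_bigr => l _; rewrite !mxE mulrDr.
Qed.

Lemma fmZl A c x z : fm A (c *: x) z = c^* * fm A x z.
Proof.
rewrite /fm mulr_sumr; apply: eq_bigr => k _; rewrite mulr_sumr.
by apply: eq_bigr => l _; rewrite !mxE rmorphM /=; ring.
Qed.

Lemma fmZr A c x z : fm A x (c *: z) = c * fm A x z.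
Proof.
rewrite /fm mulr_sumr; apply: eq_bigr => k _; rewrite mulr_sumr.
by apply: eq_bigr => l _; rewrite !mxE; ring.
Qed.

Lemma fm_er A x i : fm A x (ev i) = \sum_k (x k 0)^* * A k i.
Proof.
apply: eq_bigr => k _; rewrite (bigD1 i) //= big1 => [|l nl].
  by rewrite !mxE !eqxx /= mulr1 addr0.
by rewrite !mxE (negbTE nl) /= mulr0.
Qed.

Lemma fm_el A y i : fm A (ev i) y = \sum_l A i l * y l 0.
Proof.
rewrite /fm (bigD1 i) //= [X in _ + X]big1 => [|k nk].
  by rewrite addr0; apply: eq_bigr => l _; rewrite !mxE !eqxx /= rmorph1 mul1r.
by apply: big1 => l _; rewrite !mxE (negbTE nk) /= rmorph0 !mul0r.
Qed.

Lemma fm_ee A i j : fm A (ev i) (ev j) = A i j.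
Proof.
rewrite fm_el (bigD1 j) //= big1 => [|l nl].
  by rewrite !mxE !eqxx /= mulr1 addr0.
by rewrite !mxE (negbTE nl) /= mulr0.
Qed.

Lemma fm_conj A x y : herm A -> (fm A x y)^* = fm A y x.
Proof.
move=> hA; rewrite /fm rmorph_sum exchange_big; apply: eq_bigr => k _.
rewrite rmorph_sum; apply: eq_bigr => l _.
by rewrite !rmorphM /= conjCK hA; ring.
Qed.

Lemma trE A B : \tr (A *m B) = \sum_k \sum_l A k l * B l k.
Proof. by rewrite /mxtrace; apply: eq_bigr => k _; rewrite mxE. Qed.

Lemma pos_diag A i : pos A -> 0 <= A i i.
Proof. by move=> h; rewrite -fm_ee. Qed.

End Form.
Arguments fm {C n}.
Arguments herm {C n}.
Arguments pos {C n}.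
Arguments ev {C n}.

Section Step.
Variable C : numClosedFieldType.
Variable n : nat.
Variable A : 'M[C]_n.
Variable i : 'I_n.
Hypothesis hA : herm A.
Hypothesis pA : pos A.
Hypothesis ai : A i i != 0.
Local Notation a := (A i i).

Definition A' := \matrix_(k, l) (A k l - a^-1 * (A k i * A i l)).

Lemma a_gt0 : 0 < a.
Proof. by rewrite lt0r ai pos_diag. Qed.

Lemma a_conj : a^* = a.
Proof. by apply: conj_Creal; apply: ger0_real; apply: ltW; exact: a_gt0. Qed.

Lemma aV_conj : (a^-1)^* = a^-1.
Proof. by apply: conj_Creal; rewrite realV; apply: ger0_real; apply: ltW; exact: a_gt0. Qed.

Lemma herm_A' : herm A'.
Proof.
move=> k l; rewrite !mxE rmorphB /= rmorphM /=. rewrite aV_conj rmorphM /= !hA; ring.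
Qed.

Lemma fm_A' v : fm A' v v = fm A v v - a^-1 * (fm A v (ev i) * fm A (ev i) v).
Proof.
rewrite fm_er fm_el big_distrl /= mulr_sumr /fm -sumrB; apply: eq_bigr => k _.
rewrite big_distrr /= mulr_sumr -sumrB; apply: eq_bigr => l _.
rewrite !mxE; ring.
Qed.

Lemma pos_A' : pos A'.
Proof.
move=> v; rewrite fm_A'.
set p := fm A v (ev i); set q := fm A (ev i) v.
have hpq : q^* = p by rewrite /q fm_conj.
pose c := q / a.
have := pA (v + (- c) *: ev i).
rewrite !fmDl !fmDr !fmZl !fmZr fm_ee -/p -/q.
have -> : (- c)^* = - (p / a) by rewrite /c rmorphN /= rmorphM /= aV_conj hpq.
have anz : a != 0 by [].
suff -> : fm A v v + - c * p + (- (p / a) * q + - (p / a) * (- c * a))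
   = fm A v v - a^-1 * (p * q) by [].
rewrite /c; field; exact anz.
Qed.

Lemma A'_ii : A' i i = 0.
Proof. rewrite mxE; field; exact ai. Qed.

Lemma A'_le j : A' j j <= A j j.
Proof.
rewrite mxE lerBlDr lerDl; apply: mulr_ge0.
  by rewrite invr_ge0 ltW // a_gt0.
by rewrite -hA mulrC mul_conjC_ge0.
Qed.

Lemma tr_step B : herm B ->
  \tr (A *m B) = \tr (A' *m B) + a^-1 * fm B (\col_k A k i) (\col_k A k i).
Proof.
move=> hB; rewrite !trE /fm [X in _ = _ + _ * X]exchange_big mulr_sumr -big_split.
apply: eq_bigr => k _; rewrite mulr_sumr -big_split; apply: eq_bigr => l _.
rewrite !mxE hA; transitivity ((A k l - a^-1 * (A k i * A i l)) * B l k + a^-1 * (A i l * B l k * A k i)); [ring | by []].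
Qed.

End Step.

Section Pos.
Variable C : numClosedFieldType.

Lemma zero_diag n (A : 'M[C]_n) : herm A -> pos A -> (forall j, A j j = 0) -> A = 0.
Proof.
move=> hA pA d0; apply/matrixP => k l; rewrite mxE.
set y := A k l.
have := pA ((- y) *: ev k + ev l).
rewrite !fmDl !fmDr !fmZl !fmZr !fm_ee !d0 -(hA k l) -/y rmorphN /=.
have -> : - y^* * (- y * 0) + - y^* * y + (- y * y^* + 0) = - (2 * (y * y^*)) by ring.
rewrite oppr_ge0 pmulr_rle0 // => h.
have : y * y^* == 0 by rewrite eq_le h mul_conjC_ge0.
by rewrite mul_conjC_eq0 => /eqP.
Qed.

Lemma tr_ge0_aux (m : nat) n (A B : 'M[C]_n) : (#|[pred j | A j j != 0%R]| <= m)%N ->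
  herm A -> pos A -> herm B -> pos B -> 0 <= \tr (A *m B).
Proof.
elim: m A => [|m IH] A hc hA pA hB pB.
  case: (pickP [pred j | A j j != 0]) => [i Hi | H].
    by move: hc; rewrite leqn0 => /eqP/card0_eq/(_ i); rewrite !inE; move: Hi => /= ->.
  rewrite (zero_diag hA pA) ?mul0mx ?mxtrace0 // => j.
  by apply/eqP; move: (H j) => /= /negbFE.
case: (pickP [pred j | A j j != 0]) => [i /= Hi | H]; last first.
  rewrite (zero_diag hA pA) ?mul0mx ?mxtrace0 // => j.
  by apply/eqP; move: (H j) => /= /negbFE.
rewrite (tr_step i hA hB); apply: addr_ge0; last first.
  apply: mulr_ge0; last exact: pB.
  by rewrite invr_ge0 ltW // (a_gt0 i pA Hi).
apply: IH => //; last exact: pos_A'.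
  2: exact: herm_A'.
rewrite -ltnS; apply: leq_trans hc; apply: proper_card; apply/properP; split.
  apply/subsetP => j; rewrite !inE; apply: contra => /eqP Ajj.
  apply/eqP/le_anti; rewrite pos_diag ?andbT; last exact: pos_A'.
  by rewrite -Ajj; apply: A'_le.
by exists i; rewrite !inE ?Hi // A'_ii ?eqxx.
Qed.

Lemma tr_ge0 n (A B : 'M[C]_n) : psd A -> psd B -> 0 <= \tr (A *m B).
Proof.
move=> hA hB; apply: (@tr_ge0_aux #|'I_n|).
- exact: max_card.
- exact: psd_herm.
- exact: psd_pos.
- exact: psd_herm.
- exact: psd_pos.
Qed.

Lemma tr_sq_gt0 n (A : 'M[C]_n) : density A -> 0 < \tr (A *m A).
Proof.
case=> hA t1; rewrite lt0r tr_ge0 // andbT.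
apply/eqP => h0.
have h : \sum_k \sum_l A k l * (A k l)^* = 0.
  transitivity (\tr (A *m A)); last exact: h0.
  by rewrite trE; apply: eq_bigr => k _; apply: eq_bigr => l _; rewrite (psd_herm hA).
have : \tr A = 0.
  rewrite /mxtrace big1 // => k _.
  have hk : \sum_l A k l * (A k l)^* = 0.
    by move/psumr_eq0P: h; apply => // j _; apply: sumr_ge0 => l _; apply: mul_conjC_ge0.
  move/psumr_eq0P: hk => /(_ (fun l _ => mul_conjC_ge0 _) k isT) /eqP.
  by rewrite mul_conjC_eq0 => /eqP.
by rewrite t1 => /eqP; rewrite oner_eq0.
Qed.

End Pos.

Section Main.
Variable C : numClosedFieldType.

Lemma tr_tens m p (A : 'M[C]_m) (B : 'M[C]_p) : \tr (A *t B) = \tr A * \tr B.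
Proof. by rewrite /mxtrace mulr_sum; apply: eq_bigr => k _; rewrite mxE. Qed.

Lemma trM_tens m p (A1 B1 : 'M[C]_m) (A2 B2 : 'M[C]_p) :
  \tr ((A1 *t A2) *m (B1 *t B2)) = \tr (A1 *m B1) * \tr (A2 *m B2).
Proof. by rewrite tensmx_mul tr_tens. Qed.

Lemma tp_tr n (A B : 'M[C]_n) k :
  \tr (tenspow A k *m tenspow B k) = \tr (A *m B) ^+ k.
Proof.
elim: k => [|k IH] /=; first by rewrite mulmx1 mxtrace1 expr0.
by rewrite trM_tens IH exprS.
Qed.

Lemma maxM (a b c : C) : a \is Num.real -> b \is Num.real -> 0 < c ->
  Num.max (a * c) (b * c) = Num.max a b * c.
Proof.
move=> ra rb c0.
have rac : a * c \is Num.real by rewrite realM // gtr0_real.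
have rbc : b * c \is Num.real by rewrite realM // gtr0_real.
case: (real_leP ra rb) => h; case: (real_leP rac rbc) => h' //.
  by move: h'; rewrite ltr_pM2r // => /(le_lt_trans h); rewrite ltxx.
by move: h'; rewrite ler_pM2r // => /(lt_le_trans h); rewrite ltxx.
Qed.

Lemma maxX (a b : C) k : 0 <= a -> 0 <= b ->
  Num.max (a ^+ k) (b ^+ k) = Num.max a b ^+ k.
Proof.
move=> a0 b0.
have ra := ger0_real a0; have rb := ger0_real b0.
have rak : a ^+ k \is Num.real by rewrite realX.
have rbk : b ^+ k \is Num.real by rewrite realX.
have ak : 0 <= a ^+ k by rewrite exprn_ge0.
have bk : 0 <= b ^+ k by rewrite exprn_ge0.
case: (real_leP ra rb) => h; case: (real_leP rak rbk) => h' //.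
  by move: h' => /(le_lt_trans (lerXn2r k a0 b0 h)); rewrite ltxx.
by apply/eqP; rewrite eq_le h' andbT; apply: lerXn2r => //; apply: ltW.
Qed.

Lemma dens_real n (A : 'M[C]_n) : density A -> 0 < \tr (A *m A).
Proof. exact: tr_sq_gt0. Qed.

Lemma part1 n1 n2 (rho1 sigma1 : 'M[C]_n1) (rho2 sigma2 : 'M[C]_n2) :
  density rho1 -> density sigma1 -> density rho2 -> density sigma2 ->
  F2 rho1 sigma1 * F2 rho2 sigma2 <= F2 (rho1 *t rho2) (sigma1 *t sigma2).
Proof.
move=> d1 e1 d2 e2; rewrite /F2 !trM_tens mulf_div.
have t1 : 0 <= \tr (rho1 *m sigma1) by apply: tr_ge0; [case: d1 | case: e1].
have t2 : 0 <= \tr (rho2 *m sigma2) by apply: tr_ge0; [case: d2 | case: e2].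
have a1 := tr_sq_gt0 d1; have b1 := tr_sq_gt0 e1.
have a2 := tr_sq_gt0 d2; have b2 := tr_sq_gt0 e2.
set A1 := \tr (rho1 *m rho1) in a1 *; set B1 := \tr (sigma1 *m sigma1) in b1 *.
set A2 := \tr (rho2 *m rho2) in a2 *; set B2 := \tr (sigma2 *m sigma2) in b2 *.
have rA1 := gtr0_real a1; have rB1 := gtr0_real b1.
have rA2 := gtr0_real a2; have rB2 := gtr0_real b2.
have m1 : A1 <= Num.max A1 B1 /\ B1 <= Num.max A1 B1 /\ 0 < Num.max A1 B1.
  case: (real_leP rA1 rB1) => h; split; (try split) => //; exact: ltW.
have m2 : A2 <= Num.max A2 B2 /\ B2 <= Num.max A2 B2 /\ 0 < Num.max A2 B2.
  case: (real_leP rA2 rB2) => h; split; (try split) => //; exact: ltW.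
case: m1 => hA1 [hB1 p1]; case: m2 => hA2 [hB2 p2].
have rAA : A1 * A2 \is Num.real by rewrite realM.
have rBB : B1 * B2 \is Num.real by rewrite realM.
have hM : Num.max (A1 * A2) (B1 * B2) <= Num.max A1 B1 * Num.max A2 B2
       /\ 0 < Num.max (A1 * A2) (B1 * B2).
  case: (real_leP rAA rBB) => h.
    by split; [apply: ler_pM => //; exact: ltW | exact: mulr_gt0].
  by split; [apply: ler_pM => //; exact: ltW | exact: mulr_gt0].
case: hM => hM pM.
apply: ler_wpM2l; first exact: mulr_ge0.
by rewrite lef_pV2 ?posrE ?mulr_gt0.
Qed.

Lemma part2 n1 n2 (rho sigma : 'M[C]_n1) (tau : 'M[C]_n2) :
  density rho -> density sigma -> density tau ->
  F2 (rho *t tau) (sigma *t tau) = F2 rho sigma.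
Proof.
move=> d e f; rewrite /F2 !trM_tens.
have c0 := tr_sq_gt0 f.
rewrite maxM ?gtr0_real ?tr_sq_gt0 //.
rewrite invfM mulrACA divff ?mulr1 //.
by rewrite gt_eqF.
Qed.

Lemma part3 n (rho sigma : 'M[C]_n) (k : nat) :
  density rho -> density sigma -> (1 <= k)%N ->
  F2 (tenspow rho k) (tenspow sigma k) = F2 rho sigma ^+ k.
Proof.
move=> d e _; rewrite /F2 !tp_tr maxX ?ltW ?tr_sq_gt0 //.
by rewrite expr_div_n.
Qed.

End Main.

Theorem theorem4 :
  (forall (C : numClosedFieldType) (n1 n2 : nat)
          (rho1 sigma1 : 'M[C]_n1) (rho2 sigma2 : 'M[C]_n2),
      density rho1 -> density sigma1 -> density rho2 -> density sigma2 ->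
      F2 rho1 sigma1 * F2 rho2 sigma2 <= F2 (rho1 *t rho2) (sigma1 *t sigma2))
  /\
  (forall (C : numClosedFieldType) (n1 n2 : nat)
          (rho sigma : 'M[C]_n1) (tau : 'M[C]_n2),
      density rho -> density sigma -> density tau ->
      F2 (rho *t tau) (sigma *t tau) = F2 rho sigma)
  /\
  (forall (C : numClosedFieldType) (n : nat) (rho sigma : 'M[C]_n) (k : nat),
      density rho -> density sigma -> (1 <= k)%N ->
      F2 (tenspow rho k) (tenspow sigma k) = F2 rho sigma ^+ k).
Proof.
split; [exact: part1 | split; [exact: part2 | exact: part3]].
Qed.
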